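(* Let $A$ and $B$ be $3$-dimensional boxes with closed side lengths $a_1\le a_2\le a_3$ and $b_1\le b_2\le b_3$, such that both the arrangement with $A$ inside $B$ and the arrangement with $B$ inside $A$ are possible, and suppose $a_1\le b_1$. Then the side lengths satisfy one of the following four chains, where in each chain no two adjacent inequalities are both equalities: Type 1: $a_1\le b_1<a_2\le b_2<a_3\le b_3$; Type 2: $a_1\le b_1<a_2\le b_2\le b_3<a_3$; Type 3: $a_1\le b_1\le b_2<a_2\le a_3\le b_3$; Type 4: $a_1\le b_1\le b_2<a_2<b_3<a_3$.
   Context: A $3$-dimensional box $A$ has closed side lengths $a_1\le a_2\le a_3$ (positive reals). A state of $A$ is either closed or expanded along one side $i$: $a_i$ is replaced by $a_i'$ with $a_i\le a_i'\le 2a_i$, other sides unchanged (only one side can expand). The dimension vector of a state is its side lengths sorted non-decreasingly. A box in some state fits inside another box in some state if each coordinate of the outer one's dimension vector is strictly larger than the corresponding coordinate of the inner one's. The arrangement ''$X$ inside $Y$'' is possible if $X$ and $Y$ can be given states so that $X$ fits inside $Y$. *)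

(* Defs.v *)
From mathcomp Require Import all_boot all_order all_algebra.
Set Implicit Arguments. Unset Strict Implicit. Unset Printing Implicit Defensive.
Import Order.TTheory GRing.Theory Num.Theory.
Local Open Scope ring_scope.

Section Boxes.
Variable R : realFieldType.

(* A 3-dimensional box is given by its closed side lengths a : 'I_3 -> R. *)
(* A state of the box a: closed, or expanded along exactly one side i,
   with a i <= s i <= 2 a i and the other sides unchanged. *)
Definition is_state (a s : 'I_3 -> R) : Prop :=
  s = a \/
  exists i : 'I_3, a i <= s i <= 2 * a i /\ (forall j, j != i -> s j = a j).

Definition dimvec (s : 'I_3 -> R) : seq R := sort <=%R [seq s i | i : 'I_3].

Definition fits (s t : 'I_3 -> R) : Prop :=
  forall k : 'I_3, nth 0 (dimvec s) k < nth 0 (dimvec t) k.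

Definition possible (a b : 'I_3 -> R) : Prop :=
  exists s t, is_state a s /\ is_state b t /\ fits s t.

Definition box3 (x1 x2 x3 : R) : 'I_3 -> R := fun i => nth 0 [:: x1; x2; x3] i.

End Boxes.

(* Main.v *)
Require Import Defs.
From mathcomp Require Import all_boot all_order all_algebra.
From mathcomp Require Import lra.
Import Order.TTheory GRing.Theory Num.Theory.
Local Open Scope ring_scope.

Lemma sort3P (R : realFieldType) (x y z : R) : exists p q r,
  sort <=%R [:: x; y; z] = [:: p; q; r] /\ p <= q /\ q <= r /\
  ([/\ p = x, q = y & r = z] \/ [/\ p = x, q = z & r = y] \/
      [/\ p = y, q = x & r = z] \/ [/\ p = y, q = z & r = x] \/
      [/\ p = z, q = x & r = y] \/ [/\ p = z, q = y & r = x]).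
Proof.
rewrite /sort /=.
case: (lerP x y) => h1 /=; case: (lerP y z) => h2 /=; case: (lerP x z) => h3 /=.
all: first [ by exists x, y, z; rewrite ?h1 ?h2 ?h3 /=; split => //; split; [lra|split; [lra|]]; left
           | by exists x, z, y; split => //; split; [lra|split; [lra|]]; right; left
           | by exists y, x, z; split => //; split; [lra|split; [lra|]]; do 2 right; left
           | by exists y, z, x; split => //; split; [lra|split; [lra|]]; do 3 right; left
           | by exists z, x, y; split => //; split; [lra|split; [lra|]]; do 4 right; left
           | by exists z, y, x; split => //; split; [lra|split; [lra|]]; do 5 right
           | idtac ].
all: try lra.
Qed.

Arguments sort3P {R}.

Lemma e3 : enum 'I_3 = [:: @Ordinal 3 0 isT; @Ordinal 3 1 isT; @Ordinal 3 2 isT].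
Proof. apply: (inj_map val_inj); by rewrite val_enum_ord. Qed.

Lemma map3 (R : realFieldType) (s : 'I_3 -> R) : [seq s i | i : 'I_3] =
  [:: s (@Ordinal 3 0 isT); s (@Ordinal 3 1 isT); s (@Ordinal 3 2 isT)].
Proof. by rewrite /image_mem e3. Qed.

Lemma state_facts (R : realFieldType) (a s : 'I_3 -> R) : is_state a s ->
  (forall i, a i <= s i) /\ exists j : 'I_3, forall k, k != j -> s k = a k.
Proof.
case => [->|[i [/andP [h1 h2] hj]]].
  by split => //; exists ord0.
split; last by exists i.
by move=> k; case: (eqVneq k i) => [->//|/hj ->].
Qed.
Arguments state_facts {R a s}.

Lemma key (R : realFieldType) (a1 a2 a3 b1 b2 b3 : R) :
  a1 <= a2 -> a2 <= a3 -> b1 <= b2 -> b2 <= b3 ->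
  possible (box3 a1 a2 a3) (box3 b1 b2 b3) -> a1 < b2 /\ a2 < b3.
Proof.
move=> ha1 ha2 hb1 hb2 [s [t [Hs [Ht Hf]]]].
have [ge _] := state_facts Hs.
have [_ [j hj]] := state_facts Ht.
have g0 := ge (@Ordinal 3 0 isT); have g1 := ge (@Ordinal 3 1 isT);
have g2 := ge (@Ordinal 3 2 isT).
rewrite /box3 /= in g0 g1 g2.
have F0 := Hf (@Ordinal 3 0 isT); have F1 := Hf (@Ordinal 3 1 isT).
rewrite /dimvec !map3 in F0 F1.
have [p [q [r [E [pq [qr P]]]]]] := sort3P (s (@Ordinal 3 0 isT)) (s (@Ordinal 3 1 isT)) (s (@Ordinal 3 2 isT)).
have [p' [q' [r' [E' [pq' [qr' P']]]]]] := sort3P (t (@Ordinal 3 0 isT)) (t (@Ordinal 3 1 isT)) (t (@Ordinal 3 2 isT)).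
rewrite E E' /= in F0 F1.
have hp : a1 <= p by case: P => [[]|[[]|[[]|[[]|[[]|[]]]]]] => *; lra.
have hq : a2 <= q by case: P => [[]|[[]|[[]|[[]|[[]|[]]]]]] => *; lra.
suff [] : p' <= b2 /\ q' <= b3 by move=> *; split; lra.
clear E E' P Hf Hs ge.
case: j hj => [[|[|[|//]]] Hj] hj.
- have t1 := hj (@Ordinal 3 1 isT) isT; have t2 := hj (@Ordinal 3 2 isT) isT.
  rewrite /box3 /= in t1 t2.
  by case: P' => [[]|[[]|[[]|[[]|[[]|[]]]]]] => *; split; lra.
- have t1 := hj (@Ordinal 3 0 isT) isT; have t2 := hj (@Ordinal 3 2 isT) isT.
  rewrite /box3 /= in t1 t2.
  by case: P' => [[]|[[]|[[]|[[]|[[]|[]]]]]] => *; split; lra.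
- have t1 := hj (@Ordinal 3 0 isT) isT; have t2 := hj (@Ordinal 3 1 isT) isT.
  rewrite /box3 /= in t1 t2.
  by case: P' => [[]|[[]|[[]|[[]|[[]|[]]]]]] => *; split; lra.
Qed.
Arguments key {R a1 a2 a3 b1 b2 b3}.

Theorem theorem29 (R : realFieldType) (a1 a2 a3 b1 b2 b3 : R) :
  0 < a1 -> a1 <= a2 -> a2 <= a3 ->
  0 < b1 -> b1 <= b2 -> b2 <= b3 ->
  possible (box3 a1 a2 a3) (box3 b1 b2 b3) ->
  possible (box3 b1 b2 b3) (box3 a1 a2 a3) ->
  a1 <= b1 ->
  (* Type 1 *)
  [/\ a1 <= b1, b1 < a2, a2 <= b2, b2 < a3 & a3 <= b3]
  (* Type 2 *)
  \/ ([/\ a1 <= b1, b1 < a2, a2 <= b2, b2 <= b3 & b3 < a3]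
      /\ ~ (a2 = b2 /\ b2 = b3))
  (* Type 3 *)
  \/ ([/\ a1 <= b1, b1 <= b2, b2 < a2, a2 <= a3 & a3 <= b3]
      /\ ~ (a1 = b1 /\ b1 = b2) /\ ~ (a2 = a3 /\ a3 = b3))
  (* Type 4 *)
  \/ ([/\ a1 <= b1, b1 <= b2, b2 < a2, a2 < b3 & b3 < a3]
      /\ ~ (a1 = b1 /\ b1 = b2)).
Proof.
move=> ha0 ha1 ha2 hb0 hb1 hb2 pAB pBA hab.
have [k1 k2] := key ha1 ha2 hb1 hb2 pAB.
have [k3 k4] := key hb1 hb2 ha1 ha2 pBA.
case: (lerP a2 b2) => h22; case: (lerP a3 b3) => h33.
- by left; split.
- right; left; split; [by split; lra | lra].
- right; right; left; split; [by split; lra | split; lra].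
- right; right; right; split; [by split; lra | lra].
Qed.
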